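(* Let $X$ be a real Banach space. If $X$ is fully Mazur (respectively, fully Mackey complete), then every closed linear subspace of $X$ is fully Mazur (respectively, fully Mackey complete).
   Context: A linear subspace $Y\subset X^*$ is norming if $|||x|||=\sup\{x^*(x): x^*\in Y,\ \|x^*\|\le 1\}$ defines an equivalent norm on $X$. $X$ is fully Mazur if for every norming and norm-closed subspace $Y\subset X^*$, every $w^*$-sequentially continuous linear functional $Y\to\mathbb{R}$ is $w^*$-continuous. $X$ is fully Mackey complete if $(X,\mu(X,Y))$ is complete for every norming and norm-closed subspace $Y\subset X^*$, where $\mu(X,Y)$ is the locally convex topology on $X$ of uniform convergence on absolutely convex $w^*$-compact subsets of $Y$. *)

(* Defs.v *)
From HB Require Import structures.
From mathcomp Require Import all_boot all_order all_algebra.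
From mathcomp Require Import all_classical all_reals all_analysis.
Set Implicit Arguments. Unset Strict Implicit. Unset Printing Implicit Defensive.
Import Order.TTheory GRing.Theory Num.Theory.
Import numFieldNormedType.Exports.
Local Open Scope classical_set_scope.
Local Open Scope ring_scope.

Record lsubspace (R : realType) (X : normedModType R) := LSubspace {
  lss : set X;
  lss0 : lss 0;
  lssD : forall x y, lss x -> lss y -> lss (x + y);
  lssZ : forall (a : R) x, lss x -> lss (a *: x) }.

Section SubspaceType.
Variables (R : realType) (X : normedModType R) (V : lsubspace X).

Record subsp := SubElt { sval : X; sprop : `[< lss V sval >] }.

HB.instance Definition _ := [isSub for sval].
HB.instance Definition _ := [Choice of subsp by <:].

Lemma subsp_in (x : subsp) : lss V (sval x).
Proof. by case: x => y /= /asboolP. Qed.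

Definition sub_zero : subsp := SubElt (asboolT (lss0 V)).
Definition sub_add (x y : subsp) : subsp :=
  SubElt (asboolT (lssD (subsp_in x) (subsp_in y))).
Definition sub_scale (a : R) (x : subsp) : subsp :=
  SubElt (asboolT (lssZ a (subsp_in x))).
Definition sub_opp (x : subsp) : subsp := sub_scale (-1) x.

Lemma sub_addA : associative sub_add.
Proof. by move=> x y z; apply: val_inj; rewrite /= addrA. Qed.
Lemma sub_addC : commutative sub_add.
Proof. by move=> x y; apply: val_inj; rewrite /= addrC. Qed.
Lemma sub_add0 : left_id sub_zero sub_add.
Proof. by move=> x; apply: val_inj; rewrite /= add0r. Qed.
Lemma sub_addN : left_inverse sub_zero sub_opp sub_add.
Proof. by move=> x; apply: val_inj; rewrite /= scaleN1r addNr. Qed.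

HB.instance Definition _ :=
  GRing.isZmodule.Build subsp sub_addA sub_addC sub_add0 sub_addN.

Lemma sub_scalerA a b (v : subsp) : sub_scale a (sub_scale b v) = sub_scale (a * b) v.
Proof. by apply: val_inj; rewrite /= scalerA. Qed.
Lemma sub_scale1r : left_id 1 sub_scale.
Proof. by move=> x; apply: val_inj; rewrite /= scale1r. Qed.
Lemma sub_scalerDr : right_distributive sub_scale +%R.
Proof. by move=> a x y; apply: val_inj; rewrite /= scalerDr. Qed.
Lemma sub_scalerDl (v : subsp) : {morph sub_scale^~ v : a b / a + b}.
Proof. by move=> a b; apply: val_inj; rewrite /= scalerDl. Qed.

HB.instance Definition _ := GRing.Zmodule_isLmodule.Build R subsp
  sub_scalerA sub_scale1r sub_scalerDr sub_scalerDl.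

Definition sub_norm (x : subsp) : R := `|sval x|.
Lemma sub_ler_normD (x y : subsp) : sub_norm (x + y) <= sub_norm x + sub_norm y.
Proof. exact: ler_normD. Qed.
Lemma sub_normrZ (l : R) (x : subsp) : sub_norm (l *: x) = `|l| * sub_norm x.
Proof. exact: normrZ. Qed.
Lemma sub_normr0_eq0 (x : subsp) : sub_norm x = 0 -> x = 0.
Proof. by move=> /normr0_eq0 h; apply: val_inj. Qed.

HB.instance Definition _ := Lmodule_isNormed.Build R subsp
  sub_ler_normD sub_normrZ sub_normr0_eq0.

End SubspaceType.


Section DualNotions.
Variables (R : realType) (X : normedModType R).

Definition lin_functional (f : X -> R) : Prop :=
  forall (a : R) (x y : X), f (a *: x + y) = a * f x + f y.

Definition dual : set (X -> R) :=
  [set f | lin_functional f /\ continuous f].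

Definition dnorm (f : X -> R) : R :=
  sup [set `|f x| | x in [set x : X | `|x| <= 1]].

Definition dual_subspace (Y : set (X -> R)) : Prop :=
  [/\ Y `<=` dual, Y (fun _ => 0) &
      forall (a : R) f g, Y f -> Y g -> Y (fun x => a * f x + g x)].

Definition norm_closed (Y : set (X -> R)) : Prop :=
  forall f, dual f ->
    (forall e : R, 0 < e -> exists2 g, Y g & dnorm (fun x => f x - g x) < e) ->
    Y f.

Definition tnorm (Y : set (X -> R)) (x : X) : R :=
  sup [set f x | f in [set f | Y f /\ dnorm f <= 1]].

Definition norming (Y : set (X -> R)) : Prop :=
  [/\ (forall x y, tnorm Y (x + y) <= tnorm Y x + tnorm Y y),
      (forall (a : R) x, tnorm Y (a *: x) = `|a| * tnorm Y x) &
      exists c C : R, [/\ 0 < c, 0 < C &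
        forall x, c * `|x| <= tnorm Y x /\ tnorm Y x <= C * `|x|]].

(* the weak* topology on X* is the restriction of the topology of
   pointwise convergence on X *)
Definition wstar := {ptws X -> R}.

Definition lin_on (Y : set (X -> R)) (phi : (X -> R) -> R) : Prop :=
  forall (a : R) f g, Y f -> Y g ->
    phi (fun x => a * f x + g x) = a * phi f + phi g.

Definition wstar_seq_continuous (Y : set (X -> R)) (phi : (X -> R) -> R) : Prop :=
  forall (u : nat -> wstar) (g : wstar),
    (forall n, Y (u n)) -> Y g -> u @ \oo --> g ->
    (phi \o u) @ \oo --> phi g.

Definition wstar_continuous (Y : set (X -> R)) (phi : (X -> R) -> R) : Prop :=
  {within (Y : set wstar), continuous (phi : wstar -> R)}.

Definition fully_mazur : Prop :=
  forall Y : set (X -> R),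
    dual_subspace Y -> norming Y -> norm_closed Y ->
    forall phi : (X -> R) -> R,
      lin_on Y phi -> wstar_seq_continuous Y phi -> wstar_continuous Y phi.

(* Mackey topology mu(X, Y): uniform convergence on the absolutely convex
   weak*-compact subsets of Y *)
Definition abs_convex (K : set (X -> R)) : Prop :=
  forall f g (a b : R), K f -> K g -> `|a| + `|b| <= 1 ->
    K (fun x => a * f x + b * g x).

Definition mackey_set (Y : set (X -> R)) (K : set (X -> R)) : Prop :=
  [/\ K `<=` Y, abs_convex K & compact (K : set wstar)].

Definition pK (K : set (X -> R)) (x : X) : R := sup [set `|f x| | f in K].

Definition mackey_cauchy (Y : set (X -> R)) (F : set_system X) : Prop :=
  forall K, mackey_set Y K -> forall e : R, 0 < e ->
    exists A, F A /\ (forall x y, A x -> A y -> pK K (x - y) < e).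

Definition mackey_cvg (Y : set (X -> R)) (F : set_system X) (x0 : X) : Prop :=
  forall K, mackey_set Y K -> forall e : R, 0 < e ->
    F [set y | pK K (y - x0) < e].

Definition mackey_complete (Y : set (X -> R)) : Prop :=
  forall F : set_system X, ProperFilter F -> mackey_cauchy Y F ->
    exists x0, mackey_cvg Y F x0.

Definition fully_mackey_complete : Prop :=
  forall Y : set (X -> R),
    dual_subspace Y -> norming Y -> norm_closed Y -> mackey_complete Y.

End DualNotions.

(* Main.v *)
Require Import Defs.
From HB Require Import structures.
From mathcomp Require Import all_boot all_order all_algebra.
From mathcomp Require Import all_classical all_reals all_analysis.
From mathcomp Require Import lra ring.
Import Order.TTheory GRing.Theory Num.Theory.
Import numFieldNormedType.Exports.
Local Open Scope classical_set_scope.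
Local Open Scope ring_scope.
Set Implicit Arguments. Unset Strict Implicit. Unset Printing Implicit Defensive.
Section HahnBanach.
Context (R : realType) (X : lmodType R) (p : X -> R).
Hypothesis pD : forall x y, p (x + y) <= p x + p y.
Hypothesis pZ : forall (t : R) x, 0 <= t -> p (t *: x) = t * p x.

Definition lgraph (G : set (X * R)) : Prop :=
  [/\ G (0, 0),
      (forall (a : R) u v, G u -> G v -> G (a *: u.1 + v.1, a * u.2 + v.2)),
      (forall x b c, G (x, b) -> G (x, c) -> b = c) &
      (forall x b, G (x, b) -> b <= p x)].

Lemma lgraph_scale G k x b : lgraph G -> G (x, b) -> G (k *: x, k * b).
Proof.
case=> G0 GC _ _ Gxb; have := GC k (x, b) (0, 0) Gxb G0.
by rewrite /= addr0 addr0.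
Qed.

Lemma lgraph_sub G x b y c : lgraph G -> G (x, b) -> G (y, c) -> G (y - x, c - b).
Proof.
case=> G0 GC _ _ Gxb Gyc; have := GC (-1) (x, b) (y, c) Gxb Gyc.
by rewrite /= scaleN1r mulN1r (addrC (- x)) (addrC (- b)).
Qed.

Lemma lgraph_add G x b y c : lgraph G -> G (x, b) -> G (y, c) -> G (x + y, b + c).
Proof.
case=> G0 GC _ _ Gxb Gyc; have := GC 1 (x, b) (y, c) Gxb Gyc.
by rewrite /= scale1r mul1r.
Qed.

Lemma lgraph_extend (H : set (X * R)) x0 : lgraph H -> (forall b, ~ H (x0, b)) ->
  exists c, lgraph [set u | exists y b t, H (y, b) /\ u = (y + t *: x0, b + t * c)].
Proof.
move=> lH nx0; have [H0 HC Hf Hp] := lH.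
pose S := [set d | exists y b, H (y, b) /\ d = b - p (y - x0)].
have key y b y' b' : H (y, b) -> H (y', b') -> b - p (y - x0) <= p (y' + x0) - b'.
  move=> Hyb Hyb'; have := Hp _ _ (lgraph_add lH Hyb Hyb').
  have := pD (y - x0) (y' + x0).
  have -> : y - x0 + (y' + x0) = y + y' by rewrite addrACA addNr addr0.
  move=> h1 h2; lra.
have S0 : S !=set0 by exists (0 - p (0 - x0)), 0, 0.
have Sub : ubound S (p (0 + x0) - 0).
  by move=> d [y [b [Hyb ->]]]; exact: key.
have hasS : has_ubound S by exists (p (0 + x0) - 0).
pose c := sup S.
have cge y b : H (y, b) -> b - p (y - x0) <= c.
  by move=> Hyb; apply: ub_le_sup => //; exists y, b.
have cle y b : H (y, b) -> c <= p (y + x0) - b.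
  by move=> Hyb; apply: ge_sup => // d [y1 [b1 [Hyb1 ->]]]; exact: key.
exists c; split.
- by exists 0, 0, 0; rewrite scale0r addr0 mul0r addr0.
- move=> a u v [y1 [b1 [t1 [H1 ->]]]] [y2 [b2 [t2 [H2 ->]]]] /=.
  exists (a *: y1 + y2), (a * b1 + b2), (a * t1 + t2); split.
    by have := HC a (y1, b1) (y2, b2) H1 H2.
  congr pair.
    by rewrite scalerDr scalerA scalerDl addrACA.
  by rewrite mulrDr mulrA mulrDl addrACA.
- move=> x b b' [y1 [b1 [t1 [H1 [-> ->]]]]] [y2 [b2 [t2 [H2 []]]]].
  move=> e ->.
  have [t12|t12] := eqVneq t1 t2.
    subst t2; move/addIr: e => e; subst y2.
    by rewrite (Hf _ _ _ H1 H2).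
  exfalso; apply: (nx0 ((t1 - t2)^-1 * (b2 - b1))).
  have -> : x0 = (t1 - t2)^-1 *: (y2 - y1).
    apply: (@scalerI _ _ (t1 - t2)); first by rewrite subr_eq0.
    rewrite scalerA mulfV ?subr_eq0 // scale1r scalerBl.
    by rewrite -[t1 *: x0](addKr y1) e addrA addrK addrC.
  by apply: lgraph_scale => //; exact: lgraph_sub lH H1 H2.
- move=> x b [y [b1 [t [Hyb [-> ->]]]]].
  have [t0|tn0] := eqVneq t 0.
    by subst t; rewrite scale0r mul0r !addr0; exact: Hp _ _ Hyb.
  have [tpos|tneg] := ltP 0 t.
    have Hs := lgraph_scale t^-1 lH Hyb.
    have h := ler_wpM2l (ltW tpos) (cle _ _ Hs).
    have -> : p (y + t *: x0) = t * p (t^-1 *: y + x0).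
      by rewrite -pZ ?ltW // scalerDr scalerA mulfV // scale1r.
    move: h; rewrite mulrBr mulrA mulfV // mul1r => h; lra.
  have sp : 0 < - t by rewrite oppr_gt0 lt_neqAle tn0.
  have Hs := lgraph_scale (- t)^-1 lH Hyb.
  have h := ler_wpM2l (ltW sp) (cge _ _ Hs).
  have -> : p (y + t *: x0) = - t * p ((- t)^-1 *: y - x0).
    rewrite -pZ ?ltW // scalerBr scalerA mulfV ?oppr_eq0 // scale1r.
    by rewrite scaleNr opprK.
  move: h; rewrite mulrBr mulrA mulfV ?oppr_eq0 // mul1r => h; lra.
Qed.

Lemma hahn_banach_graph (G0 : set (X * R)) : lgraph G0 ->
  exists g : X -> R, [/\ (forall (a : R) x y, g (a *: x + y) = a * g x + g y),
    (forall x, g x <= p x) & (forall x b, G0 (x, b) -> g x = b)].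
Proof.
move=> lG0.
have hyp : forall F : set (set (X * R)), F `<=` (fun A => lgraph (A `|` G0)) ->
    total_on F subset -> lgraph (\bigcup_(B in F) B `|` G0).
  move=> F FP Ftot.
  set U := \bigcup_(B in F) B.
  have two u v : (U `|` G0) u -> (U `|` G0) v ->
      exists H, [/\ lgraph H, H `<=` U `|` G0, H u & H v].
    have inH B w : F B -> (B `|` G0) w -> (U `|` G0) w.
      by move=> FB [Bw|G0w]; [left; exists B|right].
    move=> [[B FB Bu]|G0u] [[C FC Cv]|G0v].
    - have [BC|CB] := Ftot _ _ FB FC.
        exists (C `|` G0); split; [exact: FP|move=> w; exact: inH FC|left; exact: BC|by left].
      exists (B `|` G0); split; [exact: FP|move=> w; exact: inH FB|by left|left; exact: CB].
    - by exists (B `|` G0); split; [exact: FP|move=> w; exact: inH FB|left|right].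
    - by exists (C `|` G0); split; [exact: FP|move=> w; exact: inH FC|right|left].
    - by exists G0; split => //; move=> w; right.
  have [G00 _ _ _] := lG0.
  split.
  - by right.
  - move=> a u v Uu Uv; have [H [lH HU Hu Hv]] := two _ _ Uu Uv.
    by apply: HU; case: lH => _ HC _ _; exact: HC.
  - move=> x b c Ub Uc; have [H [lH HU Hb Hc]] := two _ _ Ub Uc.
    by case: lH => _ _ Hf _; exact: Hf Hb Hc.
  - move=> x b Ub; have [H [lH HU Hb _]] := two _ _ Ub Ub.
    by case: lH => _ _ _ Hp; exact: Hp.
have [A [PA Amax]] := Zorn_bigcup hyp.
set H := A `|` G0.
have lH : lgraph H := PA.
have dom x : exists b, H (x, b).
  apply: contrapT => nx; have nx' : forall b, ~ H (x, b).
    by move=> b Hb; apply: nx; exists b.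
  have [c lH'] := lgraph_extend lH nx'.
  set H' := [set u | _] in lH'.
  have HH' : H `<=` H'.
    by move=> [y b] Hyb; exists y, b, 0; rewrite scale0r addr0 mul0r addr0.
  apply: (Amax H').
    split.
      by move=> u Au; apply: HH'; left.
    move=> AH'; apply: (nx' c); have : H' (x, c).
      by exists 0, 0, 1; split; [case: lH|rewrite add0r scale1r mul1r add0r].
    by move/AH' => Axc; left.
  have -> : H' `|` G0 = H'.
    by apply/seteqP; split => [u [//|G0u]|u]; [apply: HH'; right|left].
  exact: lH'.
have gdom x : {b | H (x, b)} by apply: cid; exact: dom.
have [H0 HC Hf Hp] := lH.
exists (fun x => sval (gdom x)); split.
- move=> a x y; case: (gdom (a *: x + y)) => b Hb /=.
  case: (gdom x) => bx Hx; case: (gdom y) => cy Hy /=.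
  exact: Hf Hb (HC a (x, bx) (y, cy) Hx Hy).
- by move=> x; case: (gdom x) => b /= /Hp.
- by move=> x b G0b; case: (gdom x) => c /= Hc; apply: Hf Hc _; right.
Qed.

End HahnBanach.
Section Basics.
Context (R : realType) (X : normedModType R).
Implicit Types (f g : X -> R) (x y : X).

Lemma lf0 f : lin_functional f -> f 0 = 0.
Proof.
by move=> lf; have := lf 1 0 0; rewrite scale1r addr0 mul1r => h; lra.
Qed.

Lemma lfZ f a x : lin_functional f -> f (a *: x) = a * f x.
Proof. by move=> lf; have := lf a x 0; rewrite !addr0 lf0 // addr0. Qed.

Lemma lfD f x y : lin_functional f -> f (x + y) = f x + f y.
Proof. by move=> lf; have := lf 1 x y; rewrite scale1r mul1r. Qed.

Lemma lfN f x : lin_functional f -> f (- x) = - f x.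
Proof. by move=> lf; rewrite -scaleN1r lfZ // mulN1r. Qed.

Lemma lfB f x y : lin_functional f -> f (x - y) = f x - f y.
Proof. by move=> lf; rewrite lfD // lfN. Qed.

Lemma lin_bound_cont f M : lin_functional f ->
  (forall x, `|f x| <= M * `|x|) -> continuous f.
Proof.
move=> lf fM x; apply/cvgrPdist_lt => e e0.
have M1 : 0 < `|M| + 1 by rewrite ltr_pwDr // normr_ge0.
apply/nbhs_normP; exists (e / (`|M| + 1)); first by rewrite /= divr_gt0.
move=> y /=; rewrite -lfB // => hy.
apply: (le_lt_trans (fM _)).
have n0 := normr_ge0 (x - y).
have h1 := ler_wpM2r n0 (ler_norm M).
move: hy; rewrite ltr_pdivlMr // => hy; nra.
Qed.
Lemma dual_bound f : dual f -> exists2 M, 0 < M & forall x, `|f x| <= M * `|x|.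
Proof.
move=> [lf cf]; have /cvgrPdist_lt/(_ 1 ltr01) := cf 0.
move=> /nbhs_normP [d /= d0 H]; rewrite lf0 // in H.
exists (2 / d); first by rewrite divr_gt0.
move=> x; have [->|x0] := eqVneq x 0; first by rewrite lf0 // !normr0 mulr0.
have nx : 0 < `|x| by rewrite normr_gt0.
pose k := d / (2 * `|x|).
have k0 : 0 < k by rewrite /k divr_gt0 // mulr_gt0.
have : `|0 - f (k *: x)| < 1.
  apply: H; rewrite /ball_ /= sub0r normrN normrZ gtr0_norm // /k.
  have -> : d / (2 * `|x|) * `|x| = d / 2 by field; rewrite gt_eqF.
  lra.
rewrite sub0r normrN lfZ // normrM gtr0_norm // => hk.
have e1 : d * `|f x| = 2 * `|x| * (k * `|f x|).
  by rewrite /k; field; rewrite gt_eqF.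
have e2 : d * (2 / d * `|x|) = 2 * `|x| by field; rewrite gt_eqF.
rewrite -(ler_pM2l d0) e1 e2.
have := normr_ge0 (f x); nra.
Qed.

Lemma dnorm_set_ub f : dual f -> has_ubound [set `|f x| | x in [set x : X | `|x| <= 1]].
Proof.
move=> /dual_bound [M M0 fM]; exists M => _ [x /= x1 <-].
by apply: (le_trans (fM x)); rewrite ler_piMr // ltW.
Qed.

Lemma dnorm_ge0 f : dual f -> 0 <= dnorm f.
Proof.
move=> df; apply: (le_trans _ (ub_le_sup (dnorm_set_ub df) _)).
  exact: normr_ge0 (f 0).
by exists 0 => //=; rewrite normr0.
Qed.

Lemma dnorm_ge f x : dual f -> `|f x| <= dnorm f * `|x|.
Proof.
move=> df; have [lf _] := df.
have [->|x0] := eqVneq x 0; first by rewrite lf0 // !normr0 mulr0.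
have nx : 0 < `|x| by rewrite normr_gt0.
have : `|f (`|x|^-1 *: x)| <= dnorm f.
  apply: ub_le_sup; first exact: dnorm_set_ub.
  exists (`|x|^-1 *: x) => //=.
  by rewrite normrZ normrV ?unitfE ?gt_eqF // normr_id mulVf ?gt_eqF.
rewrite lfZ // normrM normrV ?unitfE ?gt_eqF // normr_id.
by rewrite ler_pdivrMl // mulrC.
Qed.

Lemma dnorm_le f M : 0 <= M -> (forall x, `|f x| <= M * `|x|) -> dnorm f <= M.
Proof.
move=> M0 fM; apply: ge_sup; first by exists `|f 0|, 0 => //=; rewrite normr0.
move=> _ [x /= x1 <-]; apply: (le_trans (fM x)).
by rewrite ler_piMr.
Qed.

Lemma dual0 : dual (fun _ : X => 0).
Proof.
split; first by move=> a x y; rewrite mulr0 addr0.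
exact: cst_continuous.
Qed.

Lemma dual_comb a f g : dual f -> dual g -> dual (fun x => a * f x + g x).
Proof.
move=> [lf cf] [lg cg]; split.
  move=> b x y; rewrite lf lg; ring.
move=> x; apply: cvgD; last exact: cg.
by apply: cvgM; [exact: cvg_cst|exact: cf].
Qed.

End Basics.
Section Sub.
Context (R : realType) (X : normedModType R) (V : lsubspace X).
Local Notation S := (subsp V).
Local Notation sval := (@Defs.sval _ _ V).

Lemma svalB (v w : S) : sval (v - w) = sval v - sval w.
Proof. by change (sval v + (-1) *: sval w = sval v - sval w); rewrite scaleN1r. Qed.
Lemma svalN (v : S) : sval (- v) = - sval v.
Proof. by change ((-1) *: sval v = - sval v); rewrite scaleN1r. Qed.
Lemma svalD (v w : S) : sval (v + w) = sval v + sval w.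
Proof. by []. Qed.
Lemma svalZ a (v : S) : sval (a *: v) = a *: sval v.
Proof. by []. Qed.
Lemma sval_lin (a : R) (v w : S) : sval (a *: v + w) = a *: sval v + sval w.
Proof. by []. Qed.
Lemma sval_norm (v : S) : `|v| = `|sval v|.
Proof. by []. Qed.
Lemma sval0 : sval (0 : S) = 0.
Proof. by []. Qed.

Lemma nbhsS (v : S) (P : S -> Prop) :
  (exists2 e : R, 0 < e & forall w : S, `|v - w| < e -> P w) -> nbhs v P.
Proof. by move=> [e e0 H]; apply/(@nbhs_normP R S v P); exists e. Qed.

Lemma sval_cont : continuous sval.
Proof.
move=> v; have FF := @nbhs_filter S v.
apply/cvgrPdist_lt => e e0; apply: nbhsS; exists e => // w.
by rewrite sval_norm svalB.
Qed.

Definition restr (z : X -> R) : S -> R := fun v => z (sval v).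

Lemma dual_restr z : dual z -> dual (restr z).
Proof.
move=> [lz cz]; split; first by move=> a v w; rewrite /restr sval_lin lz.
by move=> v; apply: continuous_comp; [exact: sval_cont|exact: cz].
Qed.

Lemma dnorm_restr z : dual z -> dnorm (restr z) <= dnorm z.
Proof.
move=> dz; apply: dnorm_le; first exact: dnorm_ge0.
by move=> v; rewrite /restr sval_norm; exact: dnorm_ge.
Qed.

Lemma norm_sublinear (M : R) : 0 <= M ->
  (forall x y : X, M * `|x + y| <= M * `|x| + M * `|y|) /\
  (forall (t : R) (x : X), 0 <= t -> M * `|t *: x| = t * (M * `|x|)).
Proof.
move=> M0; split.
  by move=> x y; rewrite -mulrDr ler_wpM2l // ler_normD.
by move=> t x t0; rewrite normrZ ger0_norm // mulrCA.
Qed.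

Lemma lin_abs_bound (g : X -> R) M : lin_functional g ->
  (forall x, g x <= M * `|x|) -> forall x, `|g x| <= M * `|x|.
Proof.
move=> lg gM x; rewrite ler_norml gM andbT.
by have := gM (- x); rewrite lfN // normrN lerNl.
Qed.

Lemma hb_extend (f : S -> R) (M : R) : dual f -> 0 <= M ->
  (forall v, `|f v| <= M * `|v|) ->
  exists z : X -> R, [/\ dual z, (forall x, `|z x| <= M * `|x|) & restr z = f].
Proof.
move=> [lf cf] M0 fM.
have [pD pZ] := norm_sublinear M0.
pose G0 := [set u : X * R | exists v : S, u = (sval v, f v)].
have lG0 : lgraph (fun x : X => M * `|x|) G0.
  split.
  - by exists 0; rewrite sval0 lf0.
  - move=> a u w [v1 ->] [v2 ->] /=; exists (a *: v1 + v2).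
    by rewrite sval_lin lf.
  - move=> x b c [v1 [-> ->]] [v2 [e ->]].
    by rewrite (val_inj e).
  - move=> x b [v [-> ->]]; apply: le_trans (fM v).
    exact: ler_norm.
have [g [lg gp gG]] := hahn_banach_graph pD pZ lG0.
have gM := lin_abs_bound lg gp.
exists g; split => //.
  by split => //; exact: lin_bound_cont gM.
by apply/funext => v; rewrite /restr (gG _ (f v)) //; exists v.
Qed.

Lemma closed_dist (x0 : X) : closed (lss V) -> ~ lss V x0 ->
  exists2 d : R, 0 < d & forall v : S, d <= `|x0 - sval v|.
Proof.
move=> cV nx0.
have : nbhs x0 (~` lss V).
  by apply: open_nbhs_nbhs; split => //; exact: closed_openC.
move=> /nbhs_normP [d /= d0 H]; exists d => // v.
rewrite leNgt; apply/negP => hv.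
by apply: (H (sval v)) => //; exact: subsp_in.
Qed.

Lemma separation (x0 : X) (d : R) : 0 < d -> (forall v : S, d <= `|x0 - sval v|) ->
  exists z : X -> R, [/\ dual z, (forall x, `|z x| <= `|x|), z x0 = d &
                         forall v : S, z (sval v) = 0].
Proof.
move=> d0 dH.
have [pD pZ] := norm_sublinear (@ler01 R).
pose G0 := [set u : X * R | exists (v : S) (t : R), u = (sval v + t *: x0, t * d)].
have lG0 : lgraph (fun x : X => 1 * `|x|) G0.
  split.
  - by exists 0, 0; rewrite sval0 scale0r addr0 mul0r.
  - move=> a u w [v1 [t1 ->]] [v2 [t2 ->]] /=; exists (a *: v1 + v2), (a * t1 + t2).
    rewrite sval_lin scalerDr scalerDl scalerA mulrDl mulrA.
    by congr pair; rewrite addrACA.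
  - move=> x b c [v1 [t1 [-> ->]]] [v2 [t2 []]] e ->.
    have [<-//|t12] := eqVneq t1 t2.
    exfalso; pose w := (t1 - t2)^-1 *: (v2 - v1).
    have : sval w = x0.
      rewrite svalZ svalB; apply: (@scalerI _ _ (t1 - t2)); first by rewrite subr_eq0.
      rewrite scalerA mulfV ?subr_eq0 // scale1r scalerBl.
      by rewrite -[t1 *: x0](addKr (sval v1)) e addrA addrK addrC.
    move=> ew; have := dH w; rewrite ew subrr normr0.
    by rewrite leNgt d0.
  - move=> x b [v [t [-> ->]]]; rewrite mul1r.
    have [->|t0] := eqVneq t 0; first by rewrite mul0r normr_ge0.
    pose w := (- t^-1) *: v.
    have -> : sval v + t *: x0 = t *: (x0 - sval w).
      rewrite svalZ scalerBr scalerA mulrN mulfV // scaleN1r opprK addrC.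
      done.
    rewrite normrZ; apply: (@le_trans _ _ (`|t| * d)).
      by apply: ler_wpM2r; [exact: ltW|exact: ler_norm].
    by apply: ler_wpM2l; [exact: normr_ge0|exact: dH].
have [g [lg gp gG]] := hahn_banach_graph pD pZ lG0.
have gM := lin_abs_bound lg gp.
exists g; split.
- by split => //; exact: lin_bound_cont gM.
- by move=> x; rewrite -[`|x|]mul1r; exact: gM.
- by apply: (gG _ _); exists 0, 1; rewrite sval0 add0r scale1r mul1r.
- by move=> v; apply: (gG _ _); exists v, 0; rewrite scale0r addr0 mul0r.
Qed.

End Sub.
Section CompleteSub.
Context (R : realType) (X : completeNormedModType R) (V : lsubspace X).
Local Notation S := (subsp V).
Local Notation sval := (@Defs.sval _ _ V).

Definition csub of closed (lss V) := subsp V.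
Context (cV : closed (lss V)).
HB.instance Definition _ := NormedModule.on (csub cV).

Lemma csub_complete (F : set_system (csub cV)) : ProperFilter F -> cauchy F -> cvg F.
Proof.
move=> PF /cauchyP Fc.
pose G := sval @ F.
have PG : ProperFilter G by exact: fmap_proper_filter.
have Gc : cauchy G.
  apply/cauchyP => e e0; have [v Fv] := Fc e e0; exists (sval v).
  rewrite /G /=; apply: filterS Fv => w.
  by rewrite -!ball_normE /ball_ /= -svalB.
have /cvg_ex [x0 Gx0] := @cauchy_cvg X G PG Gc.
have x0V : lss V x0.
  apply: (@closed_cvg _ _ F PF sval (lss V) cV _ x0 Gx0).
  by apply: nearW => w; exact: subsp_in.
apply/cvg_ex; exists (SubElt (asboolT x0V) : csub cV).
move=> A /(@nbhs_normP R (csub cV)) [e /= e0 He].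
have : G (ball_ Num.norm x0 e) by apply: Gx0; apply/nbhs_normP; exists e.
rewrite /G /=; apply: filterS => w hw; apply: He.
rewrite /ball_ /=; move: hw; rewrite /ball_ /=.
by rewrite -(svalB (SubElt (asboolT x0V)) w).
Qed.

HB.instance Definition _ := Uniform_isComplete.Build (csub cV) csub_complete.

End CompleteSub.
Section TNorm.
Context (R : realType) (W : normedModType R) (Y : set (W -> R)).
Hypothesis dY : dual_subspace Y.

Let TS (x : W) := [set f x | f in [set f | Y f /\ dnorm f <= 1]].

Lemma Ydual f : Y f -> dual f.
Proof. by case: dY => h _ _; exact: h. Qed.

Lemma TS_ub x : ubound (TS x) `|x|.
Proof.
move=> _ [f [Yf df] <-]; apply: le_trans (ler_norm _) _.
apply: le_trans (dnorm_ge x (Ydual Yf)) _.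
by rewrite ler_piMl ?normr_ge0.
Qed.

Lemma TS_has x : has_ubound (TS x).
Proof. by exists `|x|; exact: TS_ub. Qed.

Lemma Y0d : Y (fun _ => 0) /\ dnorm (fun _ : W => (0:R)) <= 1.
Proof.
case: dY => _ Y0 _; split => //.
apply: le_trans (dnorm_le (lexx 0) _) ler01.
by move=> x; rewrite normr0 mul0r.
Qed.

Lemma TS_n0 x : TS x !=set0.
Proof. by exists 0, (fun _ => 0) => //; exact: Y0d. Qed.

Lemma tnorm_ge f x : Y f -> dnorm f <= 1 -> f x <= tnorm Y x.
Proof. by move=> Yf df; apply: ub_le_sup; [exact: TS_has|exists f]. Qed.

Lemma tnorm_le x : tnorm Y x <= `|x|.
Proof. by apply: ge_sup; [exact: TS_n0|exact: TS_ub]. Qed.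

Lemma tnorm_leP x r : (forall f, Y f -> dnorm f <= 1 -> f x <= r) -> tnorm Y x <= r.
Proof. by move=> H; apply: ge_sup; [exact: TS_n0|move=> _ [f [Yf df] <-]; exact: H]. Qed.

Lemma tnorm_ge0 x : 0 <= tnorm Y x.
Proof. by have [Y0 d0] := Y0d; exact: (tnorm_ge x Y0 d0). Qed.

Lemma tnormD x y : tnorm Y (x + y) <= tnorm Y x + tnorm Y y.
Proof.
apply: tnorm_leP => f Yf df; rewrite lfD; last by case: (Ydual Yf).
by apply: lerD; exact: tnorm_ge.
Qed.

Lemma tnormN x : tnorm Y (- x) <= tnorm Y x.
Proof.
apply: tnorm_leP => f Yf df; have [lf cf] := Ydual Yf.
have Yn : Y (fun x => -1 * f x + 0) by case: dY => _ Y0 YC; exact: YC.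
rewrite lfN //; have := @tnorm_ge _ x Yn.
rewrite mulN1r addr0; apply.
apply: le_trans df; apply: dnorm_le; first exact: dnorm_ge0.
move=> z; rewrite mulN1r addr0 normrN; exact: dnorm_ge.
Qed.

Lemma tnormZp (a : R) x : 0 <= a -> tnorm Y (a *: x) = a * tnorm Y x.
Proof.
move=> a0; apply/eqP; rewrite eq_le; apply/andP; split.
  apply: tnorm_leP => f Yf df; have [lf cf] := Ydual Yf.
  by rewrite lfZ //; apply: ler_wpM2l => //; exact: tnorm_ge.
have [->|an0] := eqVneq a 0; first by rewrite mul0r tnorm_ge0.
have ap : 0 < a by rewrite lt_neqAle eq_sym an0.
rewrite mulrC -ler_pdivlMr //; apply: tnorm_leP => f Yf df; have [lf cf] := Ydual Yf.
rewrite ler_pdivlMr // mulrC -lfZ //; exact: tnorm_ge.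
Qed.

Lemma tnormZ (a : R) x : tnorm Y (a *: x) = `|a| * tnorm Y x.
Proof.
have [a0|a0] := leP 0 a; first by rewrite tnormZp // ger0_norm.
have -> : a *: x = `|a| *: (- x) by rewrite ltr0_norm // scaleNr scalerN opprK.
rewrite tnormZp ?normr_ge0 //; congr (_ * _).
apply/le_anti; apply/andP; split; first exact: tnormN.
by rewrite -{1}(opprK x); exact: tnormN.
Qed.

End TNorm.
Section Lift.
Context (R : realType) (X : normedModType R) (V : lsubspace X).
Local Notation S := (subsp V).
Local Notation sval := (@Defs.sval _ _ V).
Context (Y : set (S -> R)).
Hypothesis dY : dual_subspace Y.

Definition liftZ : set (X -> R) := [set z | dual z /\ Y (restr z)].

Lemma dual_sub (f g : X -> R) : dual f -> dual g -> dual (fun x => f x - g x).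
Proof.
move=> df dg; have := dual_comb (-1) dg df.
by rewrite (_ : (fun x => -1 * g x + f x) = (fun x => f x - g x)) // funeqE => x; rewrite mulN1r addrC.
Qed.

Lemma liftZ_sub : dual_subspace liftZ.
Proof.
case: dY => YD Y0 YC; split.
- by move=> z [].
- by split; [exact: dual0|exact: Y0].
- move=> a f g [df Yf] [dg Yg]; split; first exact: dual_comb.
  exact: (YC a _ _ Yf Yg).
Qed.

Lemma liftZ_closed : norm_closed Y -> norm_closed liftZ.
Proof.
move=> cY f df H; split => //; apply: cY; first exact: dual_restr.
move=> e e0; have [g [dg Yg] hg] := H e e0; exists (restr g) => //.
apply: le_lt_trans hg.
exact: (@dnorm_restr _ _ V (fun x => f x - g x) (dual_sub df dg)).
Qed.

Lemma liftZ_norming : closed (lss V) -> norming Y -> norming liftZ.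
Proof.
move=> cV [_ _ [c [C [c0 C0 nY]]]].
have dZ := liftZ_sub.
split; [exact: tnormD|exact: tnormZ|].
pose k := c / (4 + c).
have c4 : 0 < 4 + c by lra.
have k0 : 0 < k by rewrite divr_gt0.
have kc : k * (4 + c) = c by rewrite /k mulfVK ?gt_eqF.
exists k, 1; split => // x; split; last by rewrite mul1r; exact: tnorm_le.
have [->|x0] := eqVneq x 0; first by rewrite normr0 mulr0 tnorm_ge0.
have nx : 0 < `|x| by rewrite normr_gt0.
have dpos : 0 < k * `|x| by rewrite mulr_gt0.
have [Hall|] := pselect (forall v : S, k * `|x| <= `|x - sval v|).
  have [z [dz zx zk zV]] := separation dpos Hall.
  have Zz : liftZ z.
    split => //; case: dY => _ Y0 _.
    by rewrite (_ : restr z = fun _ => 0) // funeqE => v; rewrite /restr zV.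
  rewrite -zk; apply: tnorm_ge => //.
  by apply: dnorm_le => // y; rewrite mul1r.
move=> /existsNP [v /negP]; rewrite -ltNge => hv.
set d' := `|x - sval v| in hv.
have hn : `|x| - d' <= `|sval v|.
  by have := ler_normD (x - sval v) (sval v); rewrite subrK /d' => h; lra.
have kl1 : k < 1 by rewrite /k ltr_pdivrMr // mul1r; lra.
have np : 0 < `|sval v|.
  apply: lt_le_trans hn; rewrite subr_gt0; apply: lt_trans hv _.
  by rewrite gtr_pMl.
have [cv _] := nY v; rewrite sval_norm in cv.
have cnp : 0 < c * `|sval v| by rewrite mulr_gt0.
have [_ [f [Yf df] <-] hf] : exists2 y, [set f v | f in [set f | Y f /\ dnorm f <= 1]] y &
    c * `|sval v| / 2 < y.
  apply: sup_gt; first by exists 0, (fun _ => 0) => //; exact: Y0d.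
  apply: lt_le_trans cv; lra.
have dYf := Ydual dY Yf.
have fb : forall u : S, `|f u| <= 1 * `|u|.
  move=> u; have := dnorm_ge u dYf.
  move=> _.
  apply: le_trans (dnorm_ge u dYf) _.
  by apply: ler_wpM2r => //; exact: normr_ge0.
have [z [dz zb zr]] := hb_extend dYf ler01 fb.
have Zz : liftZ z by split => //; rewrite zr.
apply: (@le_trans _ _ (z x)); last first.
  by apply: tnorm_ge => //; apply: dnorm_le => // y; exact: zb.
have zx : z x = f v + z (x - sval v).
  by rewrite -[f v](congr1 (fun h => h v) zr) /restr -lfD ?subrKC //; case: dz.
have zl : - d' <= z (x - sval v).
  by have := zb (x - sval v); rewrite mul1r ler_norml => /andP [].
have h5 : c * (`|x| - d') <= c * `|sval v| by apply: ler_wpM2l => //; exact: ltW.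
have h6 : c * d' <= c * (k * `|x|) by apply: ler_wpM2l; [exact: ltW|exact: ltW].
have h7 : k * `|x| * (4 + c) = c * `|x| by rewrite mulrAC kc.
rewrite zx; nra.
Qed.

End Lift.
Section Ptws.
Context (R : realType) (U : topologicalType).

Definition basic (f : U -> R) (s : seq U) (d : R) : set (U -> R) :=
  [set h | forall t, List.In t s -> `|h t - f t| < d].

Definition basicF (f : U -> R) : set_system (U -> R) :=
  [set A | exists s d, 0 < d /\ basic f s d `<=` A].

Lemma basicF_filter f : Filter (basicF f).
Proof.
split.
- by exists [::], 1; split.
- move=> A B [s1 [d1 [d10 H1]]] [s2 [d2 [d20 H2]]].
  exists (s1 ++ s2), (Num.min d1 d2); split; first by rewrite lt_min d10.
  move=> h hb; split.
    apply: H1 => t ts; apply: lt_le_trans (hb t _) _; first by apply: List.in_or_app; left.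
    by rewrite ge_min lexx.
  apply: H2 => t ts; apply: lt_le_trans (hb t _) _; first by apply: List.in_or_app; right.
  by rewrite ge_min lexx orbT.
- by move=> A B AB [s [d [d0 H]]]; exists s, d; split => // h /H /AB.
Qed.

Lemma ptws_nbhs (f : U -> R) (A : set (U -> R)) : nbhs (f : {ptws U -> R}) A ->
  exists s d, 0 < d /\ basic f s d `<=` A.
Proof.
have FF := basicF_filter f.
have : {ptws, basicF f --> f}.
  apply/pointwise_cvgP => t.
  move=> B /= /nbhs_ballP [e /= e0 H]; exists [:: t], e; split => // h hb.
  apply: H; rewrite /ball /= distrC; exact: hb t (or_introl erefl).
by move=> /(_ A); apply.
Qed.

Lemma ptws_cvg_eval (F : set_system (U -> R)) (f : U -> R) (t : U) : Filter F ->
  {ptws, F --> f} -> (fun g => g t) @ F --> f t.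
Proof. by move=> FF /pointwise_cvgP; apply. Qed.

End Ptws.
Section Kernel.
Context (R : realType) (X : normedModType R) (Z : set (X -> R)).
Hypothesis dZ : dual_subspace Z.

Lemma kernel_lemma (s : seq X) (L : (X -> R) -> R) : lin_on Z L ->
  (forall z, Z z -> (forall t, List.In t s -> z t = 0) -> L z = 0) ->
  exists x0, forall z, Z z -> L z = z x0.
Proof.
have [ZD Z0 ZC] := dZ.
have lin z : Z z -> lin_functional z by move=> /ZD [].
elim: s L => [|t s IH] L lL HL.
  by exists 0 => z Zz; rewrite HL // lf0 //; exact: lin.
have [[z1 [Zz1 [z1t z1s]]]|nex] :=
    pselect (exists z1, Z z1 /\ z1 t = 1 /\ forall y, List.In y s -> z1 y = 0).
  pose w z := fun u => - (z t) * z1 u + z u.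
  have Zw z : Z z -> Z (w z) by move=> Zz; exact: ZC.
  pose L' z := L (w z).
  have lL' : lin_on Z L'.
    move=> a f g Zf Zg; rewrite /L'.
    have -> : w (fun x => a * f x + g x) = (fun u => a * w f u + w g u).
      by apply/funext => u; rewrite /w; ring.
    by apply: lL; exact: Zw.
  have [x0 Hx0] : exists x0, forall z, Z z -> L' z = z x0.
    apply: IH lL' _ => z Zz zs; apply: HL; first exact: Zw.
    move=> y [<-|ys]; first by rewrite /w /= z1t mulr1 addNr.
    by rewrite /w /= (z1s y ys) (zs y ys) mulr0 addr0.
  exists (L z1 *: t + x0) => z Zz.
  have Lz : L z = z t * L z1 + L (w z).
    rewrite -lL //; last exact: Zw.
    by congr L; apply/funext => u; rewrite /w /=; ring.
  by rewrite Lz lin // -Hx0 // /L'; ring.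
apply: IH lL _ => z Zz zs; apply: HL => // y [<-|ys]; last exact: zs.
apply: contrapT => zt0; apply: nex.
exists (fun u => (z t)^-1 * z u + 0); split; first exact: ZC.
split; first by rewrite addr0 mulVf //; exact/eqP.
by move=> y0 ys; rewrite (zs y0 ys) mulr0 addr0.
Qed.

End Kernel.
Section LinOn.
Context (R : realType) (W : normedModType R).
Lemma lin_on0 (Y : set (W -> R)) (L : (W -> R) -> R) : lin_on Y L -> Y (fun _ => 0) ->
  L (fun _ => 0) = 0.
Proof.
move=> lL Y0; have := lL 1 _ _ Y0 Y0.
rewrite (_ : (fun x => 1 * 0 + 0) = (fun _ => 0)); last by apply/funext => x; rewrite mul1r addr0.
by rewrite mul1r => h; lra.
Qed.

Lemma eval_cont (v0 : W) : continuous (fun h : wstar W => h v0).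
Proof.
move=> h; have FF := @nbhs_filter (wstar W) h.
have H := (@pointwise_cvgP W R (nbhs h) h FF).
exact: (H.1 cvg_id v0).
Qed.
End LinOn.

Section Mazur.
Context (R : realType) (X : normedModType R) (V : lsubspace X).
Hypothesis cV : closed (lss V).
Local Notation S := (subsp V).
Local Notation sval := (@Defs.sval _ _ V).

Lemma mazur_sub : fully_mazur X -> fully_mazur S.
Proof.
move=> mX Y dY nY cY phi lphi sphi.
pose Z := liftZ Y.
have dZ : dual_subspace Z := liftZ_sub dY.
have nZ : norming Z := liftZ_norming dY cV nY.
have cZ : norm_closed Z := liftZ_closed cY.
pose phi' := fun z : X -> R => phi (restr z).
have lphi' : lin_on Z phi'.
  by move=> a f g [_ Yf] [_ Yg]; exact: lphi.
have sphi' : wstar_seq_continuous Z phi'.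
  move=> u g Zu Zg ug; apply: (sphi (fun n => restr (u n)) (restr g)).
  - by move=> n; case: (Zu n).
  - by case: Zg.
  apply/pointwise_cvgP => v.
  exact: (@ptws_cvg_eval R X _ g (sval v) _ ug).
have cphi' := mX Z dZ nZ cZ phi' lphi' sphi'.
have [ZD Z0 ZC] := dZ.
have phi'0 : phi' (fun _ => 0) = 0 := lin_on0 lphi' Z0.
have := (subspace_continuousP _ _).1 cphi' (fun _ => 0) Z0.
move=> /cvgrPdist_lt /(_ 1 ltr01).
rewrite /within /= => /ptws_nbhs [s [d [d0 Hs]]].
rewrite /from_subspace phi'0 in Hs.
have ker : forall z, Z z -> (forall t, List.In t s -> z t = 0) -> phi' z = 0.
  move=> z Zz zs; apply: contrapT => nz.
  pose k := 2 / phi' z.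
  have Zk : Z (fun x => k * z x + 0) by exact: ZC.
  have hb : basic (fun _ => 0) s d (fun x => k * z x + 0).
    by move=> t ts; rewrite /= zs // mulr0 addr0 subrr normr0.
  have := Hs _ hb Zk.
  have e : phi' (fun x => k * z x + 0) = k * phi' z + phi' (fun _ => 0) := lphi' k z (fun _ => 0) Zz Z0.
  rewrite e phi'0 addr0 /k mulfVK; last exact/eqP.
  rewrite sub0r normrN ger0_norm ?ler0n // => H.
  lra.
have [x0 Hx0] := kernel_lemma dZ lphi' ker.
have x0V : lss V x0.
  apply: contrapT => nx0.
  have [d1 d10 Hd1] := closed_dist cV nx0.
  have [z [dz _ zx zV]] := separation d10 Hd1.
  have rz : restr z = (fun _ : S => (0:R)) by apply/funext => v; rewrite /restr zV.
  have Zz : Z z by split => //; rewrite rz; case: dY.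
  have := Hx0 z Zz; rewrite /phi' rz.
  have -> : phi (fun _ => 0) = 0 by apply: (lin_on0 lphi); case: dY.
  by rewrite zx => e; move: d10; rewrite -e ltxx.
pose v0 : S := SubElt (asboolT x0V).
have phiE : forall w, Y w -> phi w = w v0.
  move=> w Yw; have dw := Ydual dY Yw.
  have [z [dz _ zr]] := hb_extend dw (dnorm_ge0 dw) (fun v => dnorm_ge v dw).
  have Zz : Z z by split => //; rewrite zr.
  have := Hx0 z Zz; rewrite /phi' zr => ->.
  by rewrite -zr.
rewrite /wstar_continuous.
have H1 : {in (Y : set (wstar S)), from_subspace Y (fun h : wstar S => h v0) =1 from_subspace Y phi}.
  by move=> w; rewrite inE => Yw; rewrite /from_subspace phiE.
have H2 : continuous (from_subspace (Y : set (wstar S)) (fun h : wstar S => h v0)).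
  by apply: continuous_subspaceT; exact: eval_cont.
exact: (subspace_eq_continuous H1 H2).
Qed.

End Mazur.
Section BS.
Context (R : realType) (X : completeNormedModType R) (V : lsubspace X).
Local Notation S := (subsp V).
Context (cV : closed (lss V)).

Lemma compact_norm_bounded (K : set (S -> R)) : K `<=` dual (X:=S) ->
  compact (K : set (wstar S)) ->
  exists M, 0 <= M /\ forall f, K f -> forall v : S, `|f v| <= M * `|v|.
Proof.
move=> Kd cK.
have pb : pointwise_bounded (K : set (csub cV -> R^o)).
  move=> v.
  have : compact [set (fun h : wstar S => h v) f | f in (K : set (wstar S))].
    apply: continuous_compact => //; apply: continuous_subspaceT; exact: eval_cont.
  move=> /compact_bounded [M0 [_ HM]].
  exists (M0 + 1) => f Kf; apply: (HM (M0 + 1)); first lra.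
  by exists f.
have hyp : forall f : csub cV -> R^o, (K : set (csub cV -> R^o)) f ->
    bounded_fun_norm f /\ linear f.
  move=> f Kf; have [lf cf] := Kd f Kf; split.
    have [M M0 fM] := dual_bound (Kd f Kf).
    move=> r; exists (M * r) => x xr; apply: le_trans (fM x) _.
    by apply: ler_wpM2l; [exact: ltW|exact: xr].
  by move=> a u w; exact: lf.
have := Banach_Steinhauss hyp pb.
move=> /(_ 1) [M HM].
exists `|M|; split; first exact: normr_ge0.
move=> f Kf v.
have [->|v0] := eqVneq v 0.
  by have [lf _] := Kd f Kf; rewrite lf0 // !normr0 mulr0.
have nv : 0 < `|v| by rewrite normr_gt0.
have : `|f (`|v|^-1 *: v)| <= M.
  apply: HM => //.
  by rewrite normrZ normrV ?unitfE ?gt_eqF // normr_id mulVf ?gt_eqF.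
have [lf _] := Kd f Kf.
rewrite lfZ // normrM normrV ?unitfE ?gt_eqF // normr_id => h.
have -> : `|f v| = (`|v|^-1 * `|f v|) * `|v| by field; rewrite gt_eqF.
by apply: ler_wpM2r; [exact: normr_ge0|exact: le_trans h (ler_norm M)].
Qed.

End BS.
Section PK.
Context (R : realType) (W : normedModType R).
Implicit Types (K : set (W -> R)).

Lemma pK_ge K x f B : (forall g, K g -> `|g x| <= B) -> K f -> `|f x| <= pK K x.
Proof.
move=> HB Kf; apply: ub_le_sup; last by exists f.
by exists B => _ [g Kg <-]; exact: HB.
Qed.

Lemma pK_le K x r : (exists g, K g) -> (forall g, K g -> `|g x| <= r) -> pK K x <= r.
Proof.
move=> [g Kg] H; apply: ge_sup; first by exists `|g x|, g.
by move=> _ [h Kh <-]; exact: H.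
Qed.

Lemma pK_empty K x : ~ (exists g, K g) -> pK K x = 0.
Proof.
move=> nK; rewrite /pK.
have E : [set `|f x| | f in K] = set0.
  by apply/seteqP; split => // r [g Kg _]; apply: nK; exists g.
by rewrite E; exact: sup0.
Qed.

Lemma cpt_ptws_bd (K : set (wstar W)) x : compact K ->
  exists B, forall g, K g -> `|g x| <= B.
Proof.
move=> cK.
have : compact [set (fun h : wstar W => h x) f | f in K].
  apply: continuous_compact => //; apply: continuous_subspaceT; exact: eval_cont.
move=> /compact_bounded [M0 [_ HM]].
exists (M0 + 1) => f Kf; apply: (HM (M0 + 1)); first lra.
by exists f.
Qed.

Lemma wstar_hausdorff : hausdorff_space (wstar W).
Proof. exact (@hausdorff_product W (fun _ => R) (fun x => @Rhausdorff R)). Qed.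

Lemma box_compact (B : W -> R) :
  compact ([set z : wstar W | forall x, `[- B x, B x]%classic (z x)]).
Proof.
exact (@tychonoff W (fun _ => R) (fun x => `[- B x, B x]%classic)
  (fun x => @segment_compact R (- B x) (B x))).
Qed.

Lemma lin_closed : closed ([set z : wstar W | lin_functional z]).
Proof.
pose phi (p : R * (W * W)) (z : wstar W) : R :=
  z (p.1 *: p.2.1 + p.2.2) - (p.1 * z p.2.1 + z p.2.2).
have -> : [set z : wstar W | lin_functional z] =
    \bigcap_(p in [set: R * (W * W)]) (phi p @^-1` [set r | r = 0]).
  apply/seteqP; split.
    by move=> z lz [a [x y]] _; rewrite /phi /= lz subrr.
  move=> z H a x y; apply/eqP; rewrite -subr_eq0; apply/eqP.
  exact: (H (a, (x, y))).
apply: closed_bigI => p _.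
have cl : closed [set r : R | r = 0] := @closed_eq R 0.
apply: (@preimage_closed (wstar W) R (phi p) _ _ cl).
move=> h _.
case: p => a [x y]; rewrite /phi /=.
have FF := @nbhs_filter (wstar W) h.
have e1 := @eval_cont R W (a *: x + y) h.
have e2 := @eval_cont R W x h.
have e3 := @eval_cont R W y h.
have e4 := cvgM (cvg_cst a : (fun _ : wstar W => a) @ nbhs h --> a) e2.
have e5 := cvgD (e4 FF FF) e3.
have e6 := cvgB e1 (e5 FF).
exact: (e6 FF).
Qed.
End PK.
Section Mackey.
Context (R : realType) (X : completeNormedModType R) (V : lsubspace X).
Hypothesis cV : closed (lss V).
Local Notation S := (subsp V).
Local Notation sval := (@Defs.sval _ _ V).

Lemma restr_cont : continuous (fun z : wstar X => (restr z : wstar S)).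
Proof.
move=> h; have FF := @nbhs_filter (wstar X) h.
apply/(@pointwise_cvgP S R _ (restr h) _) => v.
exact: (@eval_cont R X (sval v) h).
Qed.

Lemma seg_compact (z : X -> R) :
  compact ([set (fun x => t * z x) | t in `[-1, 1]%classic] : set (wstar X)).
Proof.
apply: continuous_compact; last exact: segment_compact.
apply: continuous_subspaceT => t0.
have FF := @nbhs_filter R t0.
apply/(@pointwise_cvgP X R _ (fun x => t0 * z x) _) => x.
have e1 := (@cvg_id _ (nbhs t0)).
have e2 := cvgM e1 (cvg_cst (z x) : (fun _ : R => z x) @ nbhs t0 --> z x).
exact: e2.
Qed.

End Mackey.
Section Mackey2.
Context (R : realType) (X : completeNormedModType R) (V : lsubspace X).
Hypothesis cV : closed (lss V).
Local Notation S := (subsp V).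
Local Notation sval := (@Defs.sval _ _ V).
Local Notation rs := (@restr R X V).

Lemma mackey_sub : fully_mackey_complete X -> fully_mackey_complete S.
Proof.
move=> mX Y dY nY cY F PF Fc.
pose Z := liftZ Y.
have dZ : dual_subspace Z := liftZ_sub dY.
have nZ : norming Z := liftZ_norming dY cV nY.
have cZ : norm_closed Z := liftZ_closed cY.
have [ZD Z0 ZC] := dZ.
have [YD Y0 YC] := dY.
pose G := sval @ F.
have PG : ProperFilter G by exact: fmap_proper_filter.
have Gc : mackey_cauchy Z G.
  move=> K [KZ aK cK] e e0.
  pose K' := [set rs z | z in K].
  have mK' : mackey_set Y K'.
    split.
    - by move=> _ [z Kz <-]; case: (KZ z Kz).
    - move=> _ _ a b [z1 K1 <-] [z2 K2 <-] ab.
      by exists (fun x => a * z1 x + b * z2 x) => //; exact: aK.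
    - have cr : {within (K : set (wstar X)), continuous (fun z : wstar X => (rs z : wstar S))}.
        by apply: continuous_subspaceT; exact: (@restr_cont R X V).
      exact (@continuous_compact (wstar X) (wstar S) (fun z => rs z) K cr cK).
  have [A [FA HA]] := Fc K' mK' e e0.
  exists (sval @` A); split.
    by rewrite /G /=; apply: filterS FA => v Av; exists v.
  move=> _ _ [x Ax <-] [y Ay <-].
  have := HA x y Ax Ay.
  suff -> : pK K' (x - y) = pK K (sval x - sval y) by [].
  rewrite /pK; congr sup; apply/seteqP; split.
    by move=> _ [_ [z Kz <-] <-]; exists z => //; rewrite /restr svalB.
  by move=> _ [z Kz <-]; exists (rs z); [exists z|rewrite /restr svalB].
have [x0 Hx0] := mX Z dZ nZ cZ G PG Gc.
have x0V : lss V x0.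
  apply: contrapT => nx0.
  have [d d0 Hd] := closed_dist cV nx0.
  have [z [dz zb zx zV]] := separation d0 Hd.
  pose K1 := [set (fun x => t * z x) | t in `[-1, 1]%classic].
  have mK1 : mackey_set Z K1.
    split.
    - move=> _ [t _ <-]; split.
        have := dual_comb t dz (@dual0 R X).
        by rewrite (_ : (fun x => t * z x + 0) = (fun x => t * z x)) // funeqE => x; rewrite addr0.
      rewrite /restr (_ : (fun v : S => t * z (sval v)) = (fun _ => 0)) //.
      by rewrite funeqE => v; rewrite zV mulr0.
    - move=> _ _ a b [t1 T1 <-] [t2 T2 <-] ab.
      exists (a * t1 + b * t2).
        move: T1 T2; rewrite /= !in_itv /= -!ler_norml => T1 T2.
        apply: le_trans (ler_normD _ _) _; rewrite !normrM.
        apply: le_trans ab; apply: lerD.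
          by rewrite ler_piMr ?normr_ge0.
        by rewrite ler_piMr ?normr_ge0.
      by rewrite funeqE => x /=; rewrite mulrDl !mulrA.
    - exact: seg_compact.
  have := Hx0 K1 mK1 d d0; rewrite /G /= => /filter_ex [v hv].
  have : `|z (sval v - x0)| <= pK K1 (sval v - x0).
    apply: (@pK_ge _ _ K1 _ _ `|z (sval v - x0)|).
      move=> _ [t Tt <-]; rewrite normrM.
      move: Tt; rewrite /= in_itv /= -ler_norml => Tt.
      by rewrite ler_piMl ?normr_ge0.
    exists 1; first by rewrite /= in_itv /= lexx andbT; lra.
    by rewrite funeqE => x; rewrite mul1r.
  have [lz _] := dz.
  rewrite lfB // zV zx sub0r normrN gtr0_norm // => h.
  by move: (lt_le_trans hv h); rewrite ltxx.
pose v0 : S := SubElt (asboolT x0V).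
exists v0 => K' [K'Y aK' cK'] e e0.
have [M [M0 HM]] := compact_norm_bounded cV (fun f Kf => Ydual dY (K'Y f Kf)) cK'.
pose KL := [set z : X -> R | [/\ (forall x, `|z x| <= M * `|x|), lin_functional z &
   K' (rs z)]].
have mKL : mackey_set Z KL.
  split.
  - move=> z [zb lz Kz]; split; last exact: K'Y.
    by split => //; exact: lin_bound_cont zb.
  - move=> z1 z2 a b [b1 l1 K1] [b2 l2 K2] ab; split.
    + move=> x; apply: le_trans (ler_normD _ _) _; rewrite !normrM.
      apply: le_trans (_ : `|a| * (M * `|x|) + `|b| * (M * `|x|) <= _).
        by apply: lerD; apply: ler_wpM2l => //; exact: normr_ge0.
      rewrite -mulrDl; apply: ler_piMl => //.
      by apply: mulr_ge0 => //; exact: normr_ge0.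
    + by move=> c x y; rewrite l1 l2; ring.
    + exact: aK'.
  - have Cc : closed ([set z : wstar X | lin_functional z] `&`
        ((fun z : wstar X => (rs z : wstar S)) @^-1` (K' : set (wstar S)))).
      apply: closedI; first exact: lin_closed.
      apply: preimage_closed; first by move=> h _; exact: restr_cont.
      exact: compact_closed (@wstar_hausdorff R S) cK'.
    have := compact_closedI (@box_compact R X (fun x : X => M * `|x|)) Cc.
    congr compact; apply/seteqP; split.
      move=> z [/= zb [lz Kz]]; split => // x.
      by have := zb x; rewrite /= in_itv /= -ler_norml.
    move=> z [zb lz Kz]; split; last by split.
    by move=> x; rewrite /= in_itv /= -ler_norml.
have := Hx0 KL mKL e e0; rewrite /G /=; apply: filterS => v hv.
rewrite /=; have [ne|em] := pselect (exists f, K' f); last by rewrite pK_empty.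
apply: le_lt_trans hv; apply: pK_le => // f Kf.
have fb : forall u : S, `|f u| <= M * `|u| by exact: HM.
have [z [dz zb zr]] := hb_extend (Ydual dY (K'Y f Kf)) M0 fb.
have KLz : KL z by split => //; [case: dz|rewrite zr].
apply: le_trans (pK_ge (B := M * `|sval v - x0|) _ KLz).
  by rewrite -zr /restr svalB.
by move=> g [gb _ _]; exact: gb.
Qed.

End Mackey2.

Unset Implicit Arguments.

Theorem corollary3p6 (R : realType) (X : completeNormedModType R) :
  (fully_mazur X ->
     forall V : lsubspace X, closed (lss V) -> fully_mazur (subsp V)) /\
  (fully_mackey_complete X ->
     forall V : lsubspace X, closed (lss V) -> fully_mackey_complete (subsp V)).
Proof.
split => hX V cV; first exact: (mazur_sub cV hX).
exact: (mackey_sub cV hX).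
Qed.
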